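(* Let $p$ be an odd prime and $\mathbb O$ Zorn's split octonion algebra over $\mathbb Q_p$. For integers $a_1,\dots,a_8$ let $\Lambda$ be the set of all $\begin{pmatrix}x&(y_1,y_2,y_3)\\ (z_1,z_2,z_3)&w\end{pmatrix}\in\mathbb O$ with $x\in p^{a_1}\mathbb Z_p$, $y_1\in p^{a_2}\mathbb Z_p$, $y_2\in p^{a_3}\mathbb Z_p$, $y_3\in p^{a_4}\mathbb Z_p$, $z_1\in p^{a_5}\mathbb Z_p$, $z_2\in p^{a_6}\mathbb Z_p$, $z_3\in p^{a_7}\mathbb Z_p$, $w\in p^{a_8}\mathbb Z_p$. Then $\Lambda$ is an order in $\mathbb O$ if and only if all of the following hold: $a_1=a_8=0$; $a_2+a_5\ge0$, $a_3+a_6\ge0$, $a_4+a_7\ge0$; $a_2+a_3\ge a_7$, $a_2+a_4\ge a_6$, $a_3+a_4\ge a_5$, $a_5+a_6\ge a_4$, $a_5+a_7\ge a_3$, $a_6+a_7\ge a_2$.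
   Context: Zorn's split octonion algebra $\mathbb O$ over a field $k$ is the set of formal matrices $\begin{pmatrix}a&\vec v\\ \vec w&d\end{pmatrix}$ with $a,d\in k$, $\vec v,\vec w\in k^3$, with entrywise addition and multiplication $\begin{pmatrix}a&\vec v\\ \vec w&d\end{pmatrix}\begin{pmatrix}\alpha&\vec\phi\\ \vec\psi&\delta\end{pmatrix}=\begin{pmatrix}a\alpha+\vec v\cdot\vec\psi & a\vec\phi+\delta\vec v-\vec w\times\vec\psi\\ \alpha\vec w+d\vec\psi+\vec v\times\vec\phi & d\delta+\vec w\cdot\vec\phi\end{pmatrix}$ (standard dot and cross products), identity $\mathbf 1=\begin{pmatrix}1&0\\0&1\end{pmatrix}$. A lattice in $\mathbb O$ is a finitely generated $\mathbb Z_p$-submodule $\Lambda$ with $\Lambda\otimes\mathbb Q_p=\mathbb O$. An order is a lattice which is a unital subring (contains $\mathbf 1$ and is closed under multiplication). *)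

(* Defs.v *)
From HB Require Import structures.
From mathcomp Require Import all_boot all_order all_algebra.
From Stdlib Require List.
Set Implicit Arguments. Unset Strict Implicit. Unset Printing Implicit Defensive.
Import Order.TTheory GRing.Theory Num.Theory.
Local Open Scope ring_scope.

(* We characterise it up to
   isomorphism: a field K with a discrete valuation v (values on nonzero
   elements; v 0 is irrelevant) such that v p = 1, the residue field is F_p
   (every integral element is congruent mod p to one of 0..p-1), and K is
   complete for v.  Such a K is (isomorphic to) Q_p. *)
Definition is_Qp (p : nat) (K : fieldType) (v : K -> int) : Prop :=
  [/\ (forall x y : K, x != 0 -> y != 0 -> v (x * y) = v x + v y),
      (forall x y : K, x != 0 -> y != 0 -> x + y != 0 ->
          Num.min (v x) (v y) <= v (x + y)),
      (p%:R : K) != 0 /\ v (p%:R) = 1,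
      (forall x : K, x != 0 -> 0 <= v x ->
          exists2 n : nat, (n < p)%N & (x - n%:R = 0 \/ 1 <= v (x - n%:R)))
    & (forall u : nat -> K,
          (forall M : int, exists N : nat, forall m n : nat, (N <= m)%N -> (N <= n)%N ->
               u m - u n = 0 \/ M <= v (u m - u n)) ->
          exists l : K, forall M : int, exists N : nat, forall n : nat, (N <= n)%N ->
               u n - l = 0 \/ M <= v (u n - l))].

Definition in_pZp (K : fieldType) (v : K -> int) (a : int) (x : K) : Prop :=
  x = 0 \/ a <= v x.
Definition in_Zp (K : fieldType) (v : K -> int) (x : K) : Prop := in_pZp v 0 x.

Record vec3 (R : Type) := V3 { c1 : R; c2 : R; c3 : R }.

Section Oct.
Variable R : nzRingType.

Definition vdot (a b : vec3 R) : R := c1 a * c1 b + c2 a * c2 b + c3 a * c3 b.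
Definition vcross (a b : vec3 R) : vec3 R :=
  V3 (c2 a * c3 b - c3 a * c2 b) (c3 a * c1 b - c1 a * c3 b) (c1 a * c2 b - c2 a * c1 b).
Definition vadd (a b : vec3 R) : vec3 R := V3 (c1 a + c1 b) (c2 a + c2 b) (c3 a + c3 b).
Definition vopp (a : vec3 R) : vec3 R := V3 (- c1 a) (- c2 a) (- c3 a).
Definition vscale (k : R) (a : vec3 R) : vec3 R := V3 (k * c1 a) (k * c2 a) (k * c3 a).
Definition vzero : vec3 R := V3 0 0 0.

(* the formal matrix ( a  v ; w  d ) *)
Record oct := Oct { oa : R; ov : vec3 R; ow : vec3 R; od : R }.

Definition omul (x y : oct) : oct :=
  Oct (oa x * oa y + vdot (ov x) (ow y))
      (vadd (vadd (vscale (oa x) (ov y)) (vscale (od y) (ov x)))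
            (vopp (vcross (ow x) (ow y))))
      (vadd (vadd (vscale (oa y) (ow x)) (vscale (od x) (ow y)))
            (vcross (ov x) (ov y)))
      (od x * od y + vdot (ow x) (ov y)).

Definition oone : oct := Oct 1 vzero vzero 1.
Definition ozero : oct := Oct 0 vzero vzero 0.
Definition oadd (x y : oct) : oct :=
  Oct (oa x + oa y) (vadd (ov x) (ov y)) (vadd (ow x) (ow y)) (od x + od y).
Definition oscale (k : R) (x : oct) : oct :=
  Oct (k * oa x) (vscale k (ov x)) (vscale k (ow x)) (k * od x).
Definition osub (x y : oct) : oct := oadd x (oscale (-1) y).

Fixpoint in_span (C : R -> Prop) (s : seq oct) (x : oct) : Prop :=
  match s with
  | [::] => x = ozero
  | g :: s' => exists2 c : R, C c & in_span C s' (osub x (oscale c g))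
  end.
End Oct.

Arguments oone {R}.
Arguments ozero {R}.

(* Lattice in O over Q_p: a finitely generated Z_p-submodule L with L (x) Q_p = O,
   i.e. L = Z_p-span of a finite list, and the Q_p-span of L is all of O. *)
Definition is_lattice (K : fieldType) (v : K -> int) (L : oct K -> Prop) : Prop :=
  (exists s : seq (oct K), forall x, L x <-> in_span (in_Zp v) s x) /\
  (exists2 s : seq (oct K), (forall g, List.In g s -> L g) & forall x, in_span (fun _ => True) s x).

Definition is_order (K : fieldType) (v : K -> int) (L : oct K -> Prop) : Prop :=
  [/\ is_lattice v L, L oone & forall x y, L x -> L y -> L (omul x y)].

Definition box (K : fieldType) (v : K -> int) (a1 a2 a3 a4 a5 a6 a7 a8 : int)
  (x : oct K) : Prop :=
  [/\ in_pZp v a1 (oa x), in_pZp v a2 (c1 (ov x)), in_pZp v a3 (c2 (ov x)),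
      in_pZp v a4 (c3 (ov x))
    & [/\ in_pZp v a5 (c1 (ow x)), in_pZp v a6 (c2 (ow x)),
      in_pZp v a7 (c3 (ow x)) & in_pZp v a8 (od x)]].

(* Main.v *)
Require Import Defs.
From HB Require Import structures.
From mathcomp Require Import all_boot all_order all_algebra.
From mathcomp Require Import ring lra zify.
Import Order.TTheory GRing.Theory Num.Theory.
Local Open Scope ring_scope.

Section Val.
Variables (p : nat) (K : fieldType) (v : K -> int).
Hypothesis hmul : forall x y : K, x != 0 -> y != 0 -> v (x * y) = v x + v y.
Hypothesis hadd : forall x y : K, x != 0 -> y != 0 -> x + y != 0 ->
          Num.min (v x) (v y) <= v (x + y).
Hypothesis hpn : (p%:R : K) != 0.
Hypothesis hpv : v (p%:R) = 1.

Local Notation P := (in_pZp v).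

Lemma v1 : v 1 = 0.
Proof. have := hmul (1:K) (1:K) (oner_neq0 K) (oner_neq0 K). rewrite mulr1. lia. Qed.

Lemma vN1 : v (-1) = 0.
Proof.
have h : (-1 : K) != 0 by rewrite oppr_eq0 oner_neq0.
have := hmul (-1:K) (-1:K) h h. rewrite mulrNN mulr1 v1. lia.
Qed.

Lemma vN x : x != 0 -> v (- x) = v x.
Proof.
move=> hx; have h : (-1 : K) != 0 by rewrite oppr_eq0 oner_neq0.
by rewrite -mulN1r hmul // vN1 add0r.
Qed.

Lemma vV x : x != 0 -> v x^-1 = - v x.
Proof.
move=> hx; have := hmul _ _ hx (invr_neq0 hx). rewrite mulfV // v1. lia.
Qed.

Definition pz (a : int) : K := (p%:R : K) ^ a.

Lemma pz_neq0 a : pz a != 0.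
Proof. by rewrite /pz expfz_neq0. Qed.

Lemma vpn (n : nat) : v (p%:R ^+ n) = n%:Z.
Proof.
elim: n => [|n IH]; first by rewrite expr0 v1.
rewrite exprS hmul ?expf_neq0 // hpv IH. lia.
Qed.

Lemma vpz a : v (pz a) = a.
Proof.
rewrite /pz; case: a => n /=; first exact: vpn.
rewrite vV ?expf_neq0 // vpn NegzE. lia.
Qed.

Lemma P0 a : P a 0. Proof. by left. Qed.

Lemma P_opp a x : P a x -> P a (- x).
Proof.
case=> [->|h]; first by rewrite oppr0; left.
have [->|hx] := eqVneq x 0; first by rewrite oppr0; left.
by right; rewrite vN.
Qed.

Lemma P_add a x y : P a x -> P a y -> P a (x + y).
Proof.
case=> [->|hx]; first by rewrite add0r.
case=> [->|hy]; first by rewrite addr0; right.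
have [x0|nx] := eqVneq x 0; first by rewrite x0 add0r; right.
have [y0|ny] := eqVneq y 0; first by rewrite y0 addr0; right.
have [s0|ns] := eqVneq (x + y) 0; first by left.
right; have := hadd _ _ nx ny ns.
rewrite /Num.min; case: ifP => _ h; lia.
Qed.

Lemma P_mulW a b c x y : P b x -> P c y -> a <= b + c -> P a (x * y).
Proof.
case=> [->|hx]; first by rewrite mul0r; left.
case=> [->|hy]; first by rewrite mulr0; left.
have [x0|nx] := eqVneq x 0; first by rewrite x0 mul0r; left.
have [y0|ny] := eqVneq y 0; first by rewrite y0 mulr0; left.
move=> h; right; rewrite hmul //; lia.
Qed.

Lemma P_pz a : P a (pz a).
Proof. by right; rewrite vpz. Qed.

Lemma P_pz_le a b : P a (pz b) -> a <= b.
Proof. case=> [h|]; last by rewrite vpz. by move: (pz_neq0 b); rewrite h eqxx. Qed.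

Lemma P_pz2_le a b c : P a (pz b * pz c) -> a <= b + c.
Proof.
case=> [/eqP h|]; last by rewrite hmul ?pz_neq0 // !vpz.
by move: h; rewrite mulf_eq0 (negbTE (pz_neq0 b)) (negbTE (pz_neq0 c)).
Qed.

Lemma P_div a x : P a x -> in_Zp v (x / pz a).
Proof.
case=> [->|h]; first by rewrite mul0r; left.
have [x0|nx] := eqVneq x 0; first by rewrite x0 mul0r; left.
right; rewrite hmul ?invr_neq0 ?pz_neq0 // vV ?pz_neq0 // vpz; lia.
Qed.

Lemma P_scale a c : in_Zp v c -> P a (c * pz a).
Proof. move=> h; apply: (P_mulW _ _ _ _ _ h (P_pz a)); lia. Qed.

Lemma oct_eq0 (x : oct K) : oa x = 0 -> c1 (ov x) = 0 -> c2 (ov x) = 0 -> c3 (ov x) = 0 ->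
  c1 (ow x) = 0 -> c2 (ow x) = 0 -> c3 (ow x) = 0 -> od x = 0 -> x = ozero.
Proof. by case: x => a [? ? ?] [? ? ?] d /= -> -> -> -> -> -> -> ->. Qed.

Definition bas (a1 a2 a3 a4 a5 a6 a7 a8 : int) : seq (oct K) :=
  [:: Oct (pz a1) (vzero K) (vzero K) 0; Oct 0 (V3 (pz a2) 0 0) (vzero K) 0;
      Oct 0 (V3 0 (pz a3) 0) (vzero K) 0; Oct 0 (V3 0 0 (pz a4)) (vzero K) 0;
      Oct 0 (vzero K) (V3 (pz a5) 0 0) 0; Oct 0 (vzero K) (V3 0 (pz a6) 0) 0;
      Oct 0 (vzero K) (V3 0 0 (pz a7)) 0; Oct 0 (vzero K) (vzero K) (pz a8)].

Lemma span_all (C : K -> Prop) a1 a2 a3 a4 a5 a6 a7 a8 xa y1 y2 y3 z1 z2 z3 xd :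
  C (xa / pz a1) -> C (y1 / pz a2) -> C (y2 / pz a3) -> C (y3 / pz a4) ->
  C (z1 / pz a5) -> C (z2 / pz a6) -> C (z3 / pz a7) -> C (xd / pz a8) ->
  in_span C (bas a1 a2 a3 a4 a5 a6 a7 a8) (Oct xa (V3 y1 y2 y3) (V3 z1 z2 z3) xd).
Proof.
move=> h1 h2 h3 h4 h5 h6 h7 h8; rewrite /bas.
(exists (xa / pz a1); first exact h1). (exists (y1 / pz a2); first exact h2).
(exists (y2 / pz a3); first exact h3). (exists (y3 / pz a4); first exact h4).
exists (z1 / pz a5); first exact h5. exists (z2 / pz a6); first exact h6.
exists (z3 / pz a7); first exact h7. (exists (xd / pz a8); first exact h8).
apply: oct_eq0.
all: cbn [oa ov ow od c1 c2 c3 osub oadd oscale vadd vscale vzero].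
all: rewrite !divfK ?pz_neq0 //.
all: ring.
Qed.

Lemma lin_eq (x y e : K) : e = 0 -> e = x - y -> x = y.
Proof. by move=> -> /eqP; rewrite eq_sym subr_eq0 => /eqP. Qed.

Lemma P_eqr a (x y : K) : P a x -> x = y -> P a y.
Proof. by move=> h <-. Qed.

Lemma P_one_le a : P a 1 -> a <= 0.
Proof. case=> [/eqP|]; by rewrite ?oner_eq0 ?v1. Qed.

Lemma span_box a1 a2 a3 a4 a5 a6 a7 a8 x :
  in_span (in_Zp v) (bas a1 a2 a3 a4 a5 a6 a7 a8) x -> box v a1 a2 a3 a4 a5 a6 a7 a8 x.
Proof.
case: x => xa [y1 y2 y3] [z1 z2 z3] xd.
move=> [k1 hk1 [k2 hk2 [k3 hk3 [k4 hk4 [k5 hk5 [k6 hk6 [k7 hk7 [k8 hk8 E]]]]]]]].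
have Ea := f_equal (@oa K) E; have Eb := f_equal (fun o => c1 (@ov K o)) E;
have Ec := f_equal (fun o => c2 (@ov K o)) E; have Ed := f_equal (fun o => c3 (@ov K o)) E;
have Ee := f_equal (fun o => c1 (@ow K o)) E; have Ef := f_equal (fun o => c2 (@ow K o)) E;
have Eg := f_equal (fun o => c3 (@ow K o)) E; have Eh := f_equal (@od K) E.
move: Ea Eb Ec Ed Ee Ef Eg Eh; cbn [oa ov ow od c1 c2 c3 osub oadd oscale vadd vscale vzero ozero] => Ea Eb Ec Ed Ee Ef Eg Eh.
rewrite /box; cbn [oa ov ow od c1 c2 c3]; split; last split.
- apply: (@P_eqr _ (k1 * pz a1)); [exact: P_scale| symmetry; apply: (lin_eq _ _ _ Ea); ring].
- apply: (@P_eqr _ (k2 * pz a2)); [exact: P_scale| symmetry; apply: (lin_eq _ _ _ Eb); ring].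
- apply: (@P_eqr _ (k3 * pz a3)); [exact: P_scale| symmetry; apply: (lin_eq _ _ _ Ec); ring].
- apply: (@P_eqr _ (k4 * pz a4)); [exact: P_scale| symmetry; apply: (lin_eq _ _ _ Ed); ring].
- apply: (@P_eqr _ (k5 * pz a5)); [exact: P_scale| symmetry; apply: (lin_eq _ _ _ Ee); ring].
- apply: (@P_eqr _ (k6 * pz a6)); [exact: P_scale| symmetry; apply: (lin_eq _ _ _ Ef); ring].
- apply: (@P_eqr _ (k7 * pz a7)); [exact: P_scale| symmetry; apply: (lin_eq _ _ _ Eg); ring].
- apply: (@P_eqr _ (k8 * pz a8)); [exact: P_scale| symmetry; apply: (lin_eq _ _ _ Eh); ring].
Qed.


Lemma P_le2 a b c x : P a x -> (x = pz b * pz c \/ x = -(pz b * pz c)) -> a <= b + c.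
Proof.
move=> h [E|E]; apply: P_pz2_le; first by rewrite -E.
by rewrite -[_ * _]opprK -E; apply: P_opp.
Qed.

Ltac boxtac := rewrite /box; cbn [oa ov ow od c1 c2 c3 vzero]; split; last split;
  first [exact: P0 | exact: P_pz].

Ltac solveP := repeat (first [ apply: P_add | apply: P_opp |
   (eapply P_mulW; [eassumption|eassumption|lia]) ]).

Lemma box_mul a2 a3 a4 a5 a6 a7 x y :
  [/\ 0 <= a2 + a5, 0 <= a3 + a6 & 0 <= a4 + a7] ->
  [/\ [/\ a7 <= a2 + a3, a6 <= a2 + a4 & a5 <= a3 + a4]
         & [/\ a4 <= a5 + a6, a3 <= a5 + a7 & a2 <= a6 + a7]] ->
  box v 0 a2 a3 a4 a5 a6 a7 0 x -> box v 0 a2 a3 a4 a5 a6 a7 0 y ->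
  box v 0 a2 a3 a4 a5 a6 a7 0 (omul x y).
Proof.
move=> [h1 h2 h3] [[h4 h5 h6] [h7 h8 h9]].
case: x => xa [y1 y2 y3] [z1 z2 z3] xd; case: y => xa' [y1' y2' y3'] [z1' z2' z3'] xd'.
rewrite /box; rewrite /omul /vdot /vcross /vadd /vscale /vopp; cbn [oa ov ow od c1 c2 c3].
case=> q1 q2 q3 q4 [q5 q6 q7 q8]; case=> r1 r2 r3 r4 [r5 r6 r7 r8].
split; last split; solveP.
Qed.

Lemma main_iff a1 a2 a3 a4 a5 a6 a7 a8 :
  is_order v (box v a1 a2 a3 a4 a5 a6 a7 a8) <->
  [/\ a1 = 0, a8 = 0,
      [/\ 0 <= a2 + a5, 0 <= a3 + a6 & 0 <= a4 + a7]
    & [/\ [/\ a7 <= a2 + a3, a6 <= a2 + a4 & a5 <= a3 + a4]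
         & [/\ a4 <= a5 + a6, a3 <= a5 + a7 & a2 <= a6 + a7]]].
Proof.
split.
  case=> _ hone hcl.
  have ha1 : a1 <= 0 by case: hone => h _ _ _ _; exact: P_one_le h.
  have ha8 : a8 <= 0 by case: hone => _ _ _ _ [_ _ _ h]; exact: P_one_le h.
  have b1 : box v a1 a2 a3 a4 a5 a6 a7 a8 (Oct (pz a1) (vzero K) (vzero K) 0) by boxtac.
  have b2 : box v a1 a2 a3 a4 a5 a6 a7 a8 (Oct 0 (V3 (pz a2) 0 0) (vzero K) 0) by boxtac.
  have b3 : box v a1 a2 a3 a4 a5 a6 a7 a8 (Oct 0 (V3 0 (pz a3) 0) (vzero K) 0) by boxtac.
  have b4 : box v a1 a2 a3 a4 a5 a6 a7 a8 (Oct 0 (V3 0 0 (pz a4)) (vzero K) 0) by boxtac.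
  have b5 : box v a1 a2 a3 a4 a5 a6 a7 a8 (Oct 0 (vzero K) (V3 (pz a5) 0 0) 0) by boxtac.
  have b6 : box v a1 a2 a3 a4 a5 a6 a7 a8 (Oct 0 (vzero K) (V3 0 (pz a6) 0) 0) by boxtac.
  have b7 : box v a1 a2 a3 a4 a5 a6 a7 a8 (Oct 0 (vzero K) (V3 0 0 (pz a7)) 0) by boxtac.
  have b8 : box v a1 a2 a3 a4 a5 a6 a7 a8 (Oct 0 (vzero K) (vzero K) (pz a8)) by boxtac.
  have R x y := hcl x y; rewrite /box in R.
  have e11 : a1 <= a1 + a1.
    move: (R _ _ b1 b1); rewrite /omul /vdot /vcross /vadd /vscale /vopp /vzero; cbn [oa ov ow od c1 c2 c3].
    case=> h _ _ _ _; apply: (P_le2 _ _ _ _ h); (left; ring) || (right; ring).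
  have e88 : a8 <= a8 + a8.
    move: (R _ _ b8 b8); rewrite /omul /vdot /vcross /vadd /vscale /vopp /vzero; cbn [oa ov ow od c1 c2 c3].
    case=> _ _ _ _ [_ _ _ h]; apply: (P_le2 _ _ _ _ h); (left; ring) || (right; ring).
  have e25 : a1 <= a2 + a5.
    move: (R _ _ b2 b5); rewrite /omul /vdot /vcross /vadd /vscale /vopp /vzero; cbn [oa ov ow od c1 c2 c3].
    case=> h _ _ _ _; apply: (P_le2 _ _ _ _ h); (left; ring) || (right; ring).
  have e36 : a1 <= a3 + a6.
    move: (R _ _ b3 b6); rewrite /omul /vdot /vcross /vadd /vscale /vopp /vzero; cbn [oa ov ow od c1 c2 c3].
    case=> h _ _ _ _; apply: (P_le2 _ _ _ _ h); (left; ring) || (right; ring).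
  have e47 : a1 <= a4 + a7.
    move: (R _ _ b4 b7); rewrite /omul /vdot /vcross /vadd /vscale /vopp /vzero; cbn [oa ov ow od c1 c2 c3].
    case=> h _ _ _ _; apply: (P_le2 _ _ _ _ h); (left; ring) || (right; ring).
  have e23 : a7 <= a2 + a3.
    move: (R _ _ b2 b3); rewrite /omul /vdot /vcross /vadd /vscale /vopp /vzero; cbn [oa ov ow od c1 c2 c3].
    case=> _ _ _ _ [_ _ h _]; apply: (P_le2 _ _ _ _ h); (left; ring) || (right; ring).
  have e24 : a6 <= a2 + a4.
    move: (R _ _ b2 b4); rewrite /omul /vdot /vcross /vadd /vscale /vopp /vzero; cbn [oa ov ow od c1 c2 c3].
    case=> _ _ _ _ [_ h _ _]; apply: (P_le2 _ _ _ _ h); (left; ring) || (right; ring).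
  have e34 : a5 <= a3 + a4.
    move: (R _ _ b3 b4); rewrite /omul /vdot /vcross /vadd /vscale /vopp /vzero; cbn [oa ov ow od c1 c2 c3].
    case=> _ _ _ _ [h _ _ _]; apply: (P_le2 _ _ _ _ h); (left; ring) || (right; ring).
  have e56 : a4 <= a5 + a6.
    move: (R _ _ b5 b6); rewrite /omul /vdot /vcross /vadd /vscale /vopp /vzero; cbn [oa ov ow od c1 c2 c3].
    case=> _ _ _ h _; apply: (P_le2 _ _ _ _ h); (left; ring) || (right; ring).
  have e57 : a3 <= a5 + a7.
    move: (R _ _ b5 b7); rewrite /omul /vdot /vcross /vadd /vscale /vopp /vzero; cbn [oa ov ow od c1 c2 c3].
    case=> _ _ h _ _; apply: (P_le2 _ _ _ _ h); (left; ring) || (right; ring).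
  have e67 : a2 <= a6 + a7.
    move: (R _ _ b6 b7); rewrite /omul /vdot /vcross /vadd /vscale /vopp /vzero; cbn [oa ov ow od c1 c2 c3].
    case=> _ h _ _ _; apply: (P_le2 _ _ _ _ h); (left; ring) || (right; ring).
  split; [lia | lia | split; lia | split; split; lia].
case=> -> -> hA hB; split.
- split.
    exists (bas 0 a2 a3 a4 a5 a6 a7 0) => x; split; last exact: span_box.
    case: x => xa [y1 y2 y3] [z1 z2 z3] xd.
    rewrite /box; cbn [oa ov ow od c1 c2 c3]; case=> q1 q2 q3 q4 [q5 q6 q7 q8].
    apply: span_all; exact: P_div.
  exists (bas 0 a2 a3 a4 a5 a6 a7 0).
    move=> g; rewrite /bas; cbn [List.In].
    by case=> [<-|[<-|[<-|[<-|[<-|[<-|[<-|[<-|[]]]]]]]]]; boxtac.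
  case=> xa [y1 y2 y3] [z1 z2 z3] xd; exact: span_all.
- rewrite /box; cbn [oa ov ow od c1 c2 c3 oone vzero]; split; last split;
    first [exact: P0 | by right; rewrite v1].
- move=> x y; exact: box_mul.
Qed.

End Val.

Theorem mainTheorem11 (p : nat) (K : fieldType) (v : K -> int)
  (hp : prime p) (hodd : odd p) (hK : is_Qp p v)
  (a1 a2 a3 a4 a5 a6 a7 a8 : int) :
  is_order v (box v a1 a2 a3 a4 a5 a6 a7 a8) <->
  [/\ a1 = 0, a8 = 0,
      [/\ 0 <= a2 + a5, 0 <= a3 + a6 & 0 <= a4 + a7]
    & [/\ [/\ a7 <= a2 + a3, a6 <= a2 + a4 & a5 <= a3 + a4]
         & [/\ a4 <= a5 + a6, a3 <= a5 + a7 & a2 <= a6 + a7]]].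
Proof.
case: hK => hmul hadd [hpn hpv] _ _.
exact: (main_iff p K v hmul hadd hpn hpv).
Qed.
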